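(* Let $\varphi$ be a finite conjunction of literals of the two forms $x\in y$ and $x = y\setminus z$ (with $x,y,z$ set variables), with finite set of variables $\mathrm{Vars}(\varphi)$. Let $M$ be a set assignment over $\mathrm{Vars}(\varphi)$ satisfying $\varphi$; let $\bar x,\bar y\in\mathrm{Vars}(\varphi)$, let $\overline{M}$ be a set assignment over $\mathrm{Vars}(\varphi)$ satisfying $\varphi$ with $\overline{M}\bar x\neq \overline{M}\bar y$, and let $\mathfrak{t}$ be a set belonging to exactly one of $\overline{M}\bar x$, $\overline{M}\bar y$. Fix a set $\mathfrak{s}$ with $\mathrm{rk}(\mathfrak{s})>\mathrm{rk}(M)$. Define $\mathsf{V}_0=\{u\in\mathrm{Vars}(\varphi)\mid \mathfrak{t}\in\overline{M}u\}$; $\mathsf{V}_n=\{u\in\mathrm{Vars}(\varphi)\mid Mu\cap\{Mw\mid w\in\mathsf{V}_{n-1}\}\neq\emptyset\}$ for $n\ge1$; $M_0v=Mv\cup\{\mathfrak{s}\}$ if $v\in\mathsf{V}_0$ and $M_0v=Mv$ otherwise; for $n\ge1$, $M_nv=M_{n-1}v\cup\{M_{n-1}u\mid u\in\mathsf{V}_{n-1},\ Mu\in Mv\}$ if $v\in\mathsf{V}_n$ and $M_nv=M_{n-1}v$ otherwise. Then for all $n\in\mathbb{N}$ and $v,x\in\mathrm{Vars}(\varphi)$: (a) $M_nv\neq\mathfrak{s}$; (b) $\mathfrak{s}\in M_nx$ if and only if $\mathfrak{s}\in M_0x$.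
   Context: A set assignment is a map from a finite set of set variables into the von Neumann universe $\mathcal{V}=\bigcup_\alpha\mathcal{V}_\alpha$, $\mathcal{V}_\alpha=\bigcup_{\beta<\alpha}\mathcal{P}(\mathcal{V}_\beta)$; it satisfies $x\in y$ iff $Mx\in My$ and $x=y\setminus z$ iff $Mx=My\setminus Mz$. The rank $\mathrm{rk}(s)$ of a set $s$ is the least ordinal $\alpha$ with $s\subseteq\mathcal{V}_\alpha$, and $\mathrm{rk}(M)=\max\{\mathrm{rk}(Mx)\mid x\in\mathrm{dom}(M)\}$. *)

(* Defs.v *)
(* Sets of the von Neumann universe are modelled by Aczel's
   well-founded trees (the standard type-theoretic model of set theory),
   with extensional equality [Eq] and membership [In_V]. *)
From Stdlib Require Import List ClassicalEpsilon.
Import ListNotations.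

Inductive V : Type := sup (A : Type) (f : A -> V).

Definition idx (a : V) : Type := match a with sup A _ => A end.
Definition elts (a : V) : idx a -> V := match a with sup _ f => f end.

Fixpoint Eq (a b : V) : Prop :=
  match a, b with
  | sup A f, sup B g =>
      (forall i, exists j, Eq (f i) (g j)) /\ (forall j, exists i, Eq (f i) (g j))
  end.

Definition In_V (a b : V) : Prop := exists j : idx b, Eq a (elts b j).

Definition union (a b : V) : V :=
  sup (idx a + idx b) (fun p => match p with inl i => elts a i | inr j => elts b j end).
Definition single (s : V) : V := sup unit (fun _ => s).
Definition setdiff (y z : V) : V :=
  sup {i : idx y | ~ In_V (elts y i) z} (fun p => elts y (proj1_sig p)).

(* von Neumann ordinals: successor, and rank
   rk(a) = least alpha with a ⊆ V_alpha = U_{a' in a} (rk(a') + 1) *)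
Definition succV (x : V) : V := union x (single x).
Fixpoint rk (a : V) : V :=
  match a with
  | sup A f => sup {i : A & idx (succV (rk (f i)))}
                   (fun p => elts (succV (rk (f (projT1 p)))) (projT2 p))
  end.
Definition rk_lt (a b : V) : Prop := In_V (rk a) (rk b).

Inductive literal : Type :=
| LIn (x y : nat)
| LDiff (x y z : nat).

Definition formula := list literal.

Definition lit_vars (l : literal) : list nat :=
  match l with LIn x y => [x; y] | LDiff x y z => [x; y; z] end.
Definition Vars (phi : formula) : list nat := flat_map lit_vars phi.

(* a set assignment over Vars(phi) is represented by a total map nat -> V,
   of which only the values on Vars(phi) matter *)
Definition sat_lit (M : nat -> V) (l : literal) : Prop :=
  match l with
  | LIn x y => In_V (M x) (M y)
  | LDiff x y z => Eq (M x) (setdiff (M y) (M z))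
  end.
Definition sat (M : nat -> V) (phi : formula) : Prop :=
  forall l, In l phi -> sat_lit M l.

(* rk(M) = max { rk(M x) | x in Vars(phi) } (as an ordinal, the union) *)
Definition rk_assign (phi : formula) (M : nat -> V) : V :=
  sup {x : nat & {_ : In x (Vars phi) & idx (rk (M x))}}
      (fun p => elts (rk (M (projT1 p))) (projT2 (projT2 p))).

Definition rk_gt_assign (s : V) (phi : formula) (M : nat -> V) : Prop :=
  In_V (rk_assign phi M) (rk s).

Fixpoint Vset (phi : formula) (M Mbar : nat -> V) (t : V) (n : nat) (u : nat) : Prop :=
  match n with
  | 0 => In u (Vars phi) /\ In_V t (Mbar u)
  | S m => In u (Vars phi) /\
           exists e, In_V e (M u) /\
             exists w, Vset phi M Mbar t m w /\ Eq e (M w)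
  end.

Fixpoint Mn (phi : formula) (M Mbar : nat -> V) (t s : V) (n : nat) (v : nat) : V :=
  match n with
  | 0 => if excluded_middle_informative (Vset phi M Mbar t 0 v)
         then union (M v) (single s) else M v
  | S m =>
      if excluded_middle_informative (Vset phi M Mbar t (S m) v)
      then union (Mn phi M Mbar t s m v)
                 (sup {u : nat | Vset phi M Mbar t m u /\ In_V (M u) (M v)}
                      (fun p => Mn phi M Mbar t s m (proj1_sig p)))
      else Mn phi M Mbar t s m v
  end.

(* Main.v *)
Require Import Defs.
From Stdlib Require Import List ClassicalEpsilon.

Lemma Eq_refl : forall a, Eq a a.
Proof. induction a as [A f IH]; simpl; split; intro i; exists i; apply IH. Qed.

Lemma Eq_sym : forall a b, Eq a b -> Eq b a.
Proof.
  induction a as [A f IH]; destruct b as [B g]; simpl; intros [H1 H2]; split.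
  - intro j; destruct (H2 j) as [i Hi]; exists i; apply IH; exact Hi.
  - intro i; destruct (H1 i) as [j Hj]; exists j; apply IH; exact Hj.
Qed.

Lemma Eq_trans : forall a b c, Eq a b -> Eq b c -> Eq a c.
Proof.
  induction a as [A f IH]; destruct b as [B g]; destruct c as [C h]; simpl;
  intros [H1 H2] [K1 K2]; split.
  - intro i; destruct (H1 i) as [j Hj]; destruct (K1 j) as [k Hk];
    exists k; eapply IH; eauto.
  - intro k; destruct (K2 k) as [j Hj]; destruct (H2 j) as [i Hi];
    exists i; eapply IH; eauto.
Qed.

Lemma Eq_elts_l : forall a b, Eq a b -> forall k : idx a, exists k', Eq (elts a k) (elts b k').
Proof. destruct a, b; simpl; intros [H1 H2] k; apply H1. Qed.

Lemma Eq_elts_r : forall a b, Eq a b -> forall k : idx b, exists k', Eq (elts a k') (elts b k).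
Proof. destruct a, b; simpl; intros [H1 H2] k; apply H2. Qed.

Lemma In_eq_l : forall x y a, Eq x y -> In_V x a -> In_V y a.
Proof.
  intros x y a E [j Hj]; exists j; eapply Eq_trans; [apply Eq_sym; exact E| exact Hj].
Qed.

Lemma In_eq_r : forall x a b, Eq a b -> In_V x a -> In_V x b.
Proof.
  intros x a b E [j Hj]. destruct (Eq_elts_l a b E j) as [k Hk].
  exists k; eapply Eq_trans; eauto.
Qed.

Inductive TC (x : V) : V -> Prop :=
| tc_in z : In_V x z -> TC x z
| tc_step y z : In_V y z -> TC x y -> TC x z.

Lemma TC_sub : forall x a b, (forall y, In_V y a -> In_V y b) -> TC x a -> TC x b.
Proof.
  intros x a b S H; inversion H; subst.
  - apply tc_in; auto.
  - eapply tc_step; eauto.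
Qed.

Lemma TC_eq : forall x a b, Eq a b -> TC x a -> TC x b.
Proof. intros x a b E; apply TC_sub; intros; eapply In_eq_r; eauto. Qed.

Lemma TC_left : forall y x w, In_V y x -> TC x w -> TC y w.
Proof.
  intros y x w Hy H; induction H.
  - eapply tc_step; eauto. apply tc_in; auto.
  - eapply tc_step; eauto.
Qed.

Lemma TC_wf : forall a x, Eq x a -> ~ TC x x.
Proof.
  induction a as [A f IH]; intros x E H.
  inversion H; subst.
  - assert (Hx : In_V x (sup A f)) by (eapply In_eq_r; eauto).
    destruct Hx as [i Hi]. simpl in Hi.
    apply (IH i (f i) (Eq_refl _)).
    apply tc_in. eapply In_eq_l; [exact Hi|]. eapply In_eq_r; eauto.
  - assert (Hy : In_V y (sup A f)) by (eapply In_eq_r; eauto).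
    destruct Hy as [i Hi]. simpl in Hi.
    apply (IH i y Hi). eapply TC_left; eauto.
Qed.

Lemma In_irrefl : forall a, ~ In_V a a.
Proof. intros a H. apply (TC_wf a a (Eq_refl a)). apply tc_in; auto. Qed.

Lemma rk_Eq : forall a b, Eq a b -> Eq (rk a) (rk b).
Proof.
  induction a as [A f IH]; destruct b as [B g]; simpl; intros [H1 H2]; split.
  - intros [i p]. destruct (H1 i) as [j Hj]. pose proof (IH i (g j) Hj) as E.
    destruct p as [k|[]].
    + destruct (Eq_elts_l _ _ E k) as [k' Hk]. exists (existT _ j (inl k')). exact Hk.
    + exists (existT _ j (inr tt)). exact E.
  - intros [j p]. destruct (H2 j) as [i Hi]. pose proof (IH i (g j) Hi) as E.
    destruct p as [k|[]].
    + destruct (Eq_elts_r _ _ E k) as [k' Hk]. exists (existT _ i (inl k')). exact Hk.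
    + exists (existT _ i (inr tt)). exact E.
Qed.

Lemma In_union : forall x a b, In_V x (union a b) <-> In_V x a \/ In_V x b.
Proof.
  intros x a b; split.
  - intros [[j|j] Hj]; [left|right]; exists j; exact Hj.
  - intros [[j Hj]|[j Hj]]; [exists (inl j)|exists (inr j)]; exact Hj.
Qed.

Section S.
Variables (phi : formula) (M Mbar : nat -> V) (t s : V).

Lemma Vset_vars : forall n u, Vset phi M Mbar t n u -> In u (Vars phi).
Proof. destruct n; simpl; tauto. Qed.

Lemma P_lem : forall n w, Vset phi M Mbar t n w -> TC s (Mn phi M Mbar t s n w).
Proof.
  induction n; intros w H; simpl.
  - destruct (excluded_middle_informative _) as [_|C]; [|contradiction].
    apply tc_in. apply In_union. right. exists tt. apply Eq_refl.
  - destruct (excluded_middle_informative _) as [_|C]; [|contradiction].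
    destruct H as [Hv [e [He [w' [Hw' E]]]]].
    eapply tc_step; [|apply (IHn w' Hw')].
    apply In_union. right.
    assert (Hin : In_V (M w') (M w)) by (eapply In_eq_l; eauto).
    exists (exist _ w' (conj Hw' Hin)). apply Eq_refl.
Qed.

Lemma Q_lem : forall n v, Eq (Mn phi M Mbar t s n v) (M v) \/ TC s (Mn phi M Mbar t s n v).
Proof.
  induction n; intros v; simpl.
  - destruct (excluded_middle_informative _) as [_|C].
    + right. apply tc_in. apply In_union. right. exists tt. apply Eq_refl.
    + left; apply Eq_refl.
  - destruct (excluded_middle_informative _) as [H|C]; [|apply IHn].
    right. destruct H as [Hv [e [He [w' [Hw' E]]]]].
    eapply tc_step; [|apply (P_lem n w' Hw')].
    apply In_union. right.
    assert (Hin : In_V (M w') (M v)) by (eapply In_eq_l; eauto).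
    exists (exist _ w' (conj Hw' Hin)). apply Eq_refl.
Qed.

Lemma a_lem : rk_gt_assign s phi M ->
  forall n v, In v (Vars phi) -> ~ Eq (Mn phi M Mbar t s n v) s.
Proof.
  intros Hrk n v Hv E. destruct (Q_lem n v) as [E'|T].
  - assert (Ems : Eq (M v) s) by (eapply Eq_trans; [apply Eq_sym; exact E'|exact E]).
    pose proof (rk_Eq _ _ Ems) as R.
    unfold rk_gt_assign in Hrk.
    assert (H1 : In_V (rk_assign phi M) (rk (M v))) by (eapply In_eq_r; [apply Eq_sym; exact R|exact Hrk]).
    destruct H1 as [j Hj].
    apply (In_irrefl (rk_assign phi M)).
    eapply In_eq_l; [apply Eq_sym; exact Hj|].
    exists (existT _ v (existT _ Hv j)). apply Eq_refl.
  - apply (TC_wf s s (Eq_refl s)). eapply TC_eq; eauto.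
Qed.

Lemma b_lem : rk_gt_assign s phi M ->
  forall n x, In_V s (Mn phi M Mbar t s n x) <-> In_V s (Mn phi M Mbar t s 0 x).
Proof.
  intros Hrk; induction n; intros x; [tauto|].
  rewrite <- IHn. simpl Mn at 1.
  destruct (excluded_middle_informative _) as [H|C]; [|tauto].
  rewrite In_union. split; [|tauto].
  intros [A|[[u [Hu Hin]] Hj]]; [exact A|].
  exfalso. apply (a_lem Hrk n u (Vset_vars n u Hu)). apply Eq_sym. exact Hj.
Qed.

End S.

Theorem lemma6 (phi : formula) (M Mbar : nat -> V) (xb yb : nat) (t s : V) :
  sat M phi ->
  In xb (Vars phi) -> In yb (Vars phi) ->
  sat Mbar phi ->
  ~ Eq (Mbar xb) (Mbar yb) ->
  ((In_V t (Mbar xb) /\ ~ In_V t (Mbar yb)) \/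
   (~ In_V t (Mbar xb) /\ In_V t (Mbar yb))) ->
  rk_gt_assign s phi M ->
  forall (n v x : nat), In v (Vars phi) -> In x (Vars phi) ->
    ~ Eq (Mn phi M Mbar t s n v) s /\
    (In_V s (Mn phi M Mbar t s n x) <-> In_V s (Mn phi M Mbar t s 0 x)).
Proof.
  intros _ _ _ _ _ _ Hrk n v x Hv Hx. split.
  - apply a_lem; auto.
  - apply b_lem; auto.
Qed.
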